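(* Let $\omega\in\mathbb{C}_*^d$ and let $u:k\mapsto\omega^kh(k)$ be a nonzero vectorial $pg$-sequence, where $h=(h_1,\dots,h_r)\in\mathbb{C}[z]\otimes\mathbb{C}^r$ and $h_i$ has multi-degree $\delta(i)\in\mathbb{Z}^d_+$. Let $A_0$ be the (unclosed) linear span of the $\mathbb{Z}^d$-translates of $u$. If $|\delta(i)|\ge2$ for some $i$, then there exists a nonzero vectorial $pg$-sequence $w:k\mapsto\omega^kg(k)$ in $A_0$ with $g\in\mathbb{C}[z]\otimes\mathbb{C}^r$ a nonconstant vector-valued polynomial of total degree at most one in each coordinate (i.e. a nonconstant linear vector-valued polynomial).
   Context: $\mathbb{C}[z]=\mathbb{C}[z_1,\dots,z_d]$, $\mathbb{C}_*^d=(\mathbb{C}\setminus\{0\})^d$, $\omega^k=\prod_i\omega_i^{k_i}$. The multi-degree of a nonzero polynomial is the exponent $\delta\in\mathbb{Z}^d_+$ of its leading monomial $z^\delta$ with respect to the lexicographic order on $\mathbb{Z}^d_+$, and $|\delta|=\delta_1+\dots+\delta_d$. The $\mathbb{Z}^d$-translates of $u$ are the functions $k\mapsto u(k-j)$, $j\in\mathbb{Z}^d$. *)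

(* Defs.v *)
From HB Require Import structures.
From mathcomp Require Import all_boot all_order all_algebra.
From mathcomp Require Import reals.
From mathcomp Require Import complex.
From mathcomp Require Import mpoly.
Set Implicit Arguments. Unset Strict Implicit. Unset Printing Implicit Defensive.
Import Order.TTheory GRing.Theory Num.Theory.
Local Open Scope ring_scope.

Fixpoint lexle (s t : seq nat) : bool :=
  match s, t with
  | x :: s', y :: t' => (x < y)%N || ((x == y) && lexle s' t')
  | _, _ => true
  end.

Definition is_multideg (d : nat) (F : ringType) (p : {mpoly F[d]}) (m : 'X_{1..d}) : Prop :=
  m \in msupp p /\ forall m', m' \in msupp p -> lexle m' m.

Definition absdeg (d : nat) (m : 'X_{1..d}) : nat := mdeg m.

Definition cpow (d : nat) (F : unitRingType) (om : 'I_d -> F) (k : 'I_d -> int) : F :=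
  \prod_(i < d) (om i) ^ (k i).

Definition pgseq (d r : nat) (F : comUnitRingType) (om : 'I_d -> F)
    (h : 'I_r -> {mpoly F[d]}) : ('I_d -> int) -> 'I_r -> F :=
  fun k i => cpow om k * (h i).@[fun j => (k j)%:~R].

Definition in_translate_span (d r : nat) (F : ringType)
    (u w : ('I_d -> int) -> 'I_r -> F) : Prop :=
  exists (s : seq (F * ('I_d -> int))),
    forall k i, w k i = \sum_(cj <- s) cj.1 * u (fun l => k l - cj.2 l) i.

Definition nonzero_seq (d r : nat) (F : ringType) (u : ('I_d -> int) -> 'I_r -> F) : Prop :=
  exists k i, u k i != 0.

(* Main.v *)
Require Import Defs.
From HB Require Import structures.
From mathcomp Require Import all_boot all_order all_algebra.
From mathcomp Require Import reals complex mpoly.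
From mathcomp Require Import zify.
Import Order.TTheory GRing.Theory Num.Theory.
Local Open Scope ring_scope.
Set Implicit Arguments. Unset Strict Implicit.

Section Diff.
Variable (R : realType) (d : nat).
Local Notation C := (R[i]).
Implicit Types (p q : {mpoly C[d]}).

Lemma msize_coef_le p k : (forall m, (k <= mdeg m)%N -> p@_m = 0) -> (msize p <= k)%N.
Proof.
move=> H; rewrite leqNgt; apply/negP => Hlt.
have pn0 : p != 0.
  apply/negP => /eqP p0; move: Hlt; by rewrite p0 msize0.
have := mlead_supp pn0; rewrite mcoeff_msupp H ?eqxx //.
by move: (mlead_deg pn0) Hlt => <-.
Qed.

Lemma msize_deriv_le l p : (msize (p^`M(l)) <= (msize p).-1)%N.
Proof.
apply: msize_coef_le => m Hm; rewrite mcoeff_deriv.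
have : (msize p <= mdeg (m + U_(l)))%N by rewrite mdegD mdeg1 addn1; case: (msize p) Hm.
move/msize_mdeg_ge; rewrite mcoeff_msupp negbK => /eqP ->; by rewrite mul0rn.
Qed.

Definition sh (l : 'I_d) : d.-tuple {mpoly C[d]} :=
  [tuple ('X_i - ((i == l)%:R)%:MP) | i < d].

Definition Dl (l : 'I_d) p := p - (p \mPo (sh l)).

Lemma DlD l : {morph Dl l : x y / x + y}.
Proof. move=> x y; by rewrite /Dl comp_mpolyD opprD addrACA. Qed.

Lemma DlZ l c p : Dl l (c *: p) = c *: Dl l p.
Proof. by rewrite /Dl comp_mpolyZ scalerBr. Qed.

Lemma Dl_eval l p (v : 'I_d -> C) :
  (Dl l p).@[v] = p.@[v] - p.@[fun j => v j - (j == l)%:R].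
Proof.
rewrite /Dl mevalB comp_mpoly_meval; congr (_ - _); apply: meval_eq => j.
by rewrite tnth_mktuple mevalB mevalXU mevalC.
Qed.


Lemma msizeXn (l : 'I_d) k : msize (('X_l : {mpoly C[d]}) ^+ k) = k.+1.
Proof. by rewrite mpolyXn msizeX mdegMn mdeg1 mul1n. Qed.

Lemma rbound (l : 'I_d) b' :
  (msize (('X_l : {mpoly C[d]}) ^+ b'.+1 - ('X_l - 1) ^+ b'.+1 - b'.+1%:R *: 'X_l ^+ b') <= b')%N.
Proof.
set T := ('X_l : {mpoly C[d]}).
rewrite exprDn big_ord_recl big_ord_recl /=.
set REST := (X in _ + (_ + X)).
have -> : T ^+ b'.+1 - (T ^+ (b'.+1 - 0) * (-1) ^+ 0 *+ 'C(b'.+1, 0) +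
   (T ^+ (b'.+1 - bump 0 0) * (-1) ^+ bump 0 0 *+ 'C(b'.+1, bump 0 0) + REST)) -
   b'.+1%:R *: T ^+ b' = - REST.
  rewrite subn0 expr0 mulr1 bin0 mulr1n /bump /= add1n subSS subn0 expr1 mulrN1 bin1.
  rewrite scaler_nat mulNrn. 
  rewrite opprD addrA subrr add0r opprD opprK addrC addrA addNr add0r. done.
rewrite msizeN /REST; apply: (leq_trans (msize_sum _ _ _)).
apply/bigmax_leqP => i _.
rewrite -scaler_nat; apply: (leq_trans (msizeZ_le _ _)).
rewrite -signr_odd mulrC mulr_sign; case: odd; rewrite ?msizeN msizeXn;
  move: (ltn_ord i); rewrite /bump /=; lia.
Qed.

End Diff.
Arguments sh {R d} l. Arguments Dl {R d} l p. Arguments msizeXn {R d} l k. Arguments rbound {R d} l b'.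
Section S.
Variable (R : realType) (d : nat).
Local Notation C := (R[i]).
Lemma eS (l : 'I_d) m : 'X_[m] \mPo sh l = ('X_l - 1) ^+ (m l) * \prod_(i < d | i != l) ('X_i : {mpoly C[d]}) ^+ m i.
Proof.
rewrite (comp_mpolyX m (sh l)) (bigD1 l) //=.
rewrite tnth_mktuple eqxx. congr (_ * _).
apply: eq_bigr => i /negbTE Hi; by rewrite tnth_mktuple Hi mulr0n mpolyC0 subr0.
Qed.

Lemma eX (l : 'I_d) m : 'X_[m] = ('X_l : {mpoly C[d]}) ^+ (m l) * \prod_(i < d | i != l) ('X_i : {mpoly C[d]}) ^+ m i.
Proof. by rewrite mpolyXE_id (bigD1 l). Qed.

Lemma eD (l : 'I_d) m : ('X_[m] : {mpoly C[d]})^`M(l) =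
   ((m l)%:R *: ('X_l : {mpoly C[d]}) ^+ (m l).-1) * \prod_(i < d | i != l) ('X_i : {mpoly C[d]}) ^+ m i.
Proof.
rewrite mderivX; case Hb: (m l) => [|b']; first by rewrite !scale0r mul0r.
rewrite -scalerAl; congr (_ *: _).
rewrite mpolyXE_id (bigD1 l) //= mnmBE mnm1E eqxx Hb subn1 /=; f_equal.
apply: eq_bigr => i Hi; rewrite mnmBE mnm1E.
have -> : (l == i) = false by apply/negbTE; rewrite eq_sym.
by rewrite subn0.
Qed.

Lemma monoB (l : 'I_d) m :
  (msize (Dl l 'X_[m] - ('X_[m] : {mpoly C[d]})^`M(l)) <= (mdeg m).-1)%N.
Proof.
have hX := msizeX C m; rewrite (eX l m) in hX.
rewrite /Dl eD eS (eX l m) -mulrBl -mulrBl.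
move: hX; move: (\prod_(i < d | i != l) _) => Q hX.
case Hb: (m l) hX => [|b'] hX.
  rewrite !expr0 subrr scale0r subrr. have -> : (0 * Q = 0) by apply: mul0r. by rewrite msize0.
have Qn0 : Q != 0.
  apply/negP => /eqP Q0; move: hX; by rewrite Q0 mulr0 msize0.
have hQ : (mdeg m).+1 = (b'.+1 + msize Q)%N.
  rewrite -hX msizeM ?msizeXn //.
  by rewrite -msize_poly_eq0 msizeXn.
rewrite [b'.+1.-1]/=.
move: (rbound (R:=R) l b'); move: (_ - _ - _) => r hr.
case: (eqVneq r 0) => [->|rn0]; first by rewrite mul0r msize0.
have e : mdeg m = (b' + msize Q)%N by move: hQ; rewrite addSn => -[].
by rewrite msizeM // e -!subn1 leq_sub2r // leq_add2r.
Qed.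

Definition Fd (l : 'I_d) (p : {mpoly C[d]}) := Dl l p - p^`M(l).

Lemma FdD l : {morph Fd l : x y / x + y}.
Proof. move=> x y; by rewrite /Fd DlD mderivD opprD addrACA. Qed.

Lemma FdZ (l : 'I_d) (c : C) (p : {mpoly C[d]}) : Fd l (c *: p) = c *: Fd l p.
Proof. rewrite /Fd DlZ mderivZ; exact/esym/scalerBr. Qed.

Lemma Fd0 (l : 'I_d) : Fd l (0 : {mpoly C[d]}) = 0.
Proof. by rewrite /Fd /Dl comp_mpoly0 mderiv0 !subr0. Qed.

Lemma lemB (l : 'I_d) (p : {mpoly C[d]}) :
  (msize (Dl l p - p^`M(l)) <= (msize p).-2)%N.
Proof.
have key : forall s : seq 'X_{1..d}, (forall m, m \in s -> (mdeg m < msize p)%N) ->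
   (msize (Fd l (\sum_(m <- s) p@_m *: 'X_[m])) <= (msize p).-2)%N.
  elim => [|a s IH] Hs; first by rewrite big_nil Fd0 msize0.
  rewrite big_cons FdD; apply: (leq_trans (msizeD_le _ _)); rewrite geq_max.
  rewrite IH ?andbT; last by move=> m Hm; apply: Hs; rewrite in_cons Hm orbT.
  rewrite FdZ; apply: (leq_trans (msizeZ_le _ _)); apply: (leq_trans (monoB _ _)).
  have := Hs a; rewrite in_cons eqxx => /(_ isT); move: (mdeg a) (msize p) => x N; lia.
have := key (msupp p) (fun m Hm => msize_mdeg_lt Hm).
by rewrite -mpolyE.
Qed.

Lemma msizeDl (l : 'I_d) (p : {mpoly C[d]}) :
  (msize (Dl l p) <= (msize p).-1)%N.
Proof.
have -> : Dl l p = (Dl l p - p^`M(l)) + p^`M(l) by rewrite subrK.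
apply: (leq_trans (msizeD_le _ _)); rewrite geq_max msize_deriv_le andbT.
apply: (leq_trans (lemB _ _)); move: (msize p) => N; lia.
Qed.
End S.
Arguments Fd {R d} l p.
Section S4.
Variable (R : realType) (d : nat).
Local Notation C := (R[i]).

Definition Dseq (s : seq 'I_d) (p : {mpoly C[d]}) := foldr (fun l q => Dl l q) p s.
Definition derseq (s : seq 'I_d) (p : {mpoly C[d]}) := foldr (fun l q => q^`M(l)) p s.
Definition sumU (s : seq 'I_d) : 'X_{1..d} := foldr (fun x m => (U_(x) + m)%MM) 0%MM s.

Lemma msize_derseq s p : (msize (derseq s p) <= msize p - size s)%N.
Proof.
elim: s => [|l s IH] /=; first by rewrite subn0.
apply: (leq_trans (msize_deriv_le _ _)); move: IH.
move: (msize (derseq s p)) (msize p) => x N; lia.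
Qed.

Lemma DseqE s p : (msize (Dseq s p - derseq s p) <= msize p - (size s).+1)%N.
Proof.
elim: s => [|l s IH] /=; first by rewrite subrr msize0.
have -> : Dl l (Dseq s p) - (derseq s p)^`M(l) =
   (Dl l (derseq s p) - (derseq s p)^`M(l)) + Dl l (Dseq s p - derseq s p).
  move: (derseq s p) (Dseq s p) => A B.
  have e : Dl l B = Dl l A + Dl l (B - A) by rewrite -DlD addrC subrK.
  by rewrite e addrAC.
apply: (leq_trans (msizeD_le _ _)); rewrite geq_max; apply/andP; split.
  apply: (leq_trans (lemB _ _)); move: (msize_derseq s p).
  move: (msize (derseq s p)) (msize p) => x N; lia.
apply: (leq_trans (msizeDl _ _)); move: IH.
move: (msize (Dseq s p - derseq s p)) (msize p) => x N; lia.
Qed.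

Lemma derseq_coef s p m : exists c : nat, (0 < c)%N /\ (derseq s p)@_m = p@_(m + sumU s) *+ c.
Proof.
elim: s m => [|l s IH] m /=; first by exists 1%N; rewrite addm0 mulr1n.
rewrite mcoeff_deriv; have [c [c0 ->]] := IH (m + U_(l))%MM.
exists (c * (m l).+1)%N; split; first by rewrite muln_gt0 c0.
by rewrite -mulrnA addmA.
Qed.

Lemma exists_seq n (m : 'X_{1..d}) : mdeg m = n -> exists s, sumU s = m /\ size s = n.
Proof.
elim: n m => [|n IH] m Hm.
  exists [::]; split => //; apply/esym/eqP; by rewrite -mdeg_eq0 Hm.
case: (pickP (fun i => m i != 0%N)) => [i Hi|H0]; last first.
  have : m = 0%MM by apply/mnmP => i; move: (H0 i) => /negbFE/eqP ->; rewrite mnm0E.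
  by move=> E; move: Hm; rewrite E mdeg0.
have le : (U_(i) <= m)%MM by rewrite lep1mP.
have E : ((m - U_(i)) + U_(i))%MM = m := submK le.
have [s [Hs1 Hs2]] : exists s, sumU s = (m - U_(i))%MM /\ size s = n.
  apply: IH; move: Hm; rewrite -{1}E mdegD mdeg1 addn1; by case.
exists (i :: s); split; last by rewrite /= Hs2.
by rewrite /= Hs1 addmC E.
Qed.

Lemma boolz (b : bool) : ((b%:Z)%:~R : C) = b%:R.
Proof. by case: b. Qed.

Lemma Dseq_span s : exists t : seq (C * ('I_d -> int)), forall p (k : 'I_d -> int),
  (Dseq s p).@[fun j => (k j)%:~R] = \sum_(cj <- t) cj.1 * p.@[fun j => (k j - cj.2 j)%:~R].
Proof.
elim: s => [|l s [t IH]] /=.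
  exists [:: (1, fun _ => 0)] => p k; rewrite big_seq1 /= mul1r.
  by apply: meval_eq => j; rewrite subr0.
exists (t ++ map (fun cj => (- cj.1, fun j => cj.2 j + (j == l)%:Z)) t) => p k.
rewrite Dl_eval big_cat big_map /= IH.
have -> : (Dseq s p).@[fun j => (k j)%:~R - (j == l)%:R] =
          (Dseq s p).@[fun j => ((fun j => k j - (j == l)%:Z) j)%:~R].
  by apply: meval_eq => j /=; rewrite intrB boolz.
rewrite IH -sumrN; congr (_ + _); apply: eq_bigr => cj _.
rewrite mulNr; congr (- (_ * _)); apply: meval_eq => j /=; congr (_%:~R); lia.
Qed.
End S4.

Lemma cpow_neq0 (R : realType) (d : nat) (om : 'I_d -> R[i]) k :
  (forall l, om l != 0) -> cpow om k != 0.
Proof.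
move=> Hom; rewrite /cpow; apply/prodf_neq0 => i _.
by rewrite expfz_eq0 negb_and Hom orbT.
Qed.

Lemma cpowD (R : realType) (d : nat) (om : 'I_d -> R[i]) k j :
  (forall l, om l != 0) -> cpow om k = cpow om j * cpow om (fun l => k l - j l).
Proof.
move=> Hom; rewrite /cpow -big_split; apply: eq_bigr => i _ /=.
by rewrite -exprzDr ?unitfE // addrC subrK.
Qed.

Unset Implicit Arguments. Set Strict Implicit.
Theorem lemma5p1 (R : realType) (d r : nat) (om : 'I_d -> R[i])
    (h : 'I_r -> {mpoly R[i][d]}) :
  (forall l, om l != 0) ->
  nonzero_seq (pgseq om h) ->
  (exists (i : 'I_r) (m : 'X_{1..d}), is_multideg (h i) m /\ (2 <= absdeg m)%N) ->
  exists g : 'I_r -> {mpoly R[i][d]},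
    (forall i, (msize (g i) <= 2)%N) /\
    (exists i, (1 < msize (g i))%N) /\
    nonzero_seq (pgseq om g) /\
    in_translate_span (pgseq om h) (pgseq om g).
Proof.
move=> Hom _ [i0 [m0 [[Hm0 _] Hdeg]]].
case: (@arg_maxnP _ i0 predT (fun i => msize (h i)) isT) => i1 _ Hmax.
set N := msize (h i1) in Hmax.
have HN : (3 <= N)%N.
  have := msize_mdeg_lt Hm0; have := Hmax i0 isT; rewrite /absdeg in Hdeg.
  move: (msize (h i0)) (mdeg m0) Hdeg => a b; lia.
have hn0 : h i1 != 0 by apply/negP => /eqP H; move: HN; rewrite /N H msize0.
have Hbeta := mlead_supp hn0; have Hdb := mlead_deg hn0; rewrite -/N in Hdb.
have [s0 [Hs1 Hs2]] := exists_seq (erefl (mdeg (mlead (h i1)))).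
case: s0 Hs1 Hs2 => [|l s] Hs1 Hs2; first by move: Hs2 Hdb HN => /= <- <-.
rewrite /= in Hs1 Hs2.
have Hsz : size s = (N - 2)%N by move: Hs2 Hdb HN; move: (mdeg (mlead (h i1))) => x; lia.
exists (fun i => Dseq s (h i)).
have Hsplit : forall p : {mpoly R[i][d]}, Dseq s p = derseq s p + (Dseq s p - derseq s p).
  by move=> p; rewrite addrC subrK.
have HE : forall i, (msize (Dseq s (h i) - derseq s (h i)) <= 1)%N.
  move=> i; apply: (leq_trans (DseqE _ _)); rewrite Hsz.
  have := Hmax i isT; move: (msize (h i)) => a; lia.
have HG1 : (Dseq s (h i1))@_(U_(l)) != 0.
  rewrite (Hsplit (h i1)) mcoeffD.
  have -> : (Dseq s (h i1) - derseq s (h i1))@_(U_(l)) = 0.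
    apply/eqP; rewrite -[_ == 0]negbK -mcoeff_msupp; apply: msize_mdeg_ge.
    by rewrite mdeg1 HE.
  have [c [c0 ->]] := derseq_coef s (h i1) (U_(l)).
  rewrite addr0 mulrn_eq0 negb_or -lt0n c0 /= Hs1 -mcoeff_msupp //.
have Hm2 : (1 < msize (Dseq s (h i1)))%N.
  have := msize_mdeg_lt (m := U_(l)) (p := Dseq s (h i1)); rewrite mdeg1; apply.
  by rewrite mcoeff_msupp.
split.
  move=> i; rewrite Hsplit; apply: (leq_trans (msizeD_le _ _)); rewrite geq_max.
  rewrite (leq_trans (HE i)) // andbT; apply: (leq_trans (msize_derseq _ _)).
  rewrite Hsz; have := Hmax i isT; move: (msize (h i)) => a; lia.
split; first by exists i1.
split.
  set G := Dseq s (h i1).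
  have HG2 : (msize G <= 2)%N.
    rewrite /G Hsplit; apply: (leq_trans (msizeD_le _ _)); rewrite geq_max.
    rewrite (leq_trans (HE i1)) // andbT; apply: (leq_trans (msize_derseq _ _)).
    rewrite Hsz -/N; lia.
  have E1 : Dl l G = G^`M(l).
    apply/eqP; rewrite -subr_eq0 -msize_poly_eq0 -leqn0.
    apply: (leq_trans (lemB _ _)); move: HG2; move: (msize G) => a; lia.
  have E2 : G^`M(l) = ((G^`M(l))@_0)%:MP.
    apply: msize1_polyC; apply: (leq_trans (msize_deriv_le _ _)).
    move: HG2; move: (msize G) => a; lia.
  have c0 : (G^`M(l))@_0 != 0 by rewrite mcoeff_deriv add0m mnm0E mulr1n.
  have := Dl_eval l G (fun j => ((fun _ => 0 : int) j)%:~R).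
  rewrite E1 {1}E2 mevalC => Hc.
  case: (eqVneq (G.@[fun j => ((fun _ => 0 : int) j)%:~R]) 0) => H0.
    exists (fun j => - ((j == l)%:Z)), i1; rewrite /pgseq mulf_neq0 ?cpow_neq0 //.
    move: c0; rewrite Hc H0 sub0r oppr_eq0; apply: contraNN => /eqP H.
    apply/eqP; rewrite -H; apply: meval_eq => j /=.
    by rewrite intrN boolz (_ : (0:int)%:~R = 0 :> R[i]) // sub0r.
  exists (fun _ => 0), i1; by rewrite /pgseq mulf_neq0 ?cpow_neq0.
have [t Ht] := Dseq_span R s.
exists (map (fun cj => (cj.1 * cpow om cj.2, cj.2)) t) => k i.
rewrite /pgseq Ht big_map mulr_sumr; apply: eq_bigr => cj _ /=.
rewrite (@cpowD R d om k cj.2 Hom).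
set a := cpow om cj.2; set b := cpow om _; set x := (h i).@[_].
rewrite [cj.1 * a]mulrC -!mulrA; congr (_ * _); by rewrite mulrCA.
Qed.
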